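(* Let $\delta\in(0,1)$. For all $x,y\in[\delta,1]$, \[ (-\ln x)-(-\ln y)+\frac{x-y}{y}\ \ge\ \frac{|\ln x-\ln y|^2}{2\ln(1/\delta)\vee 4}. \]
   Context: The term $\frac{x-y}{y}$ equals $-\nabla(-\ln)|_y\,(x-y)$. $a\vee b=\max(a,b)$. *)

(* Defs.v *)
From Stdlib Require Import Reals.

(* Main.v *)
Require Import Defs.
From Stdlib Require Import Reals Lra Psatz.
Open Scope R_scope.

Lemma ln_le' a b : 0 < a -> a <= b -> ln a <= ln b.
Proof.
  intros ha hab. destruct (Rle_lt_or_eq_dec _ _ hab) as [h|h].
  - left; apply ln_increasing; auto.
  - subst; lra.
Qed.

Lemma key t M : 4 <= M -> -2 * t <= M -> t ^ 2 <= (exp t - 1 - t) * M.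
Proof.
  intros h4 h2.
  destruct (Rle_lt_dec (-2) t) as [h|h].
  - assert (e : exp t = exp (t/2) * exp (t/2)) by (rewrite <- exp_plus; f_equal; field).
    pose proof (exp_ineq1_le (t/2)).
    assert (exp t >= (1 + t/2)^2) by (rewrite e; nra).
    nra.
  - pose proof (exp_pos t). nra.
Qed.

Theorem lemma3 (delta : R) (hd0 : 0 < delta) (hd1 : delta < 1) :
  forall x y : R, delta <= x <= 1 -> delta <= y <= 1 ->
    (- ln x) - (- ln y) + (x - y) / y >=
    (Rabs (ln x - ln y)) ^ 2 / Rmax (2 * ln (1 / delta)) 4.
Proof.
  intros x y hx hy.
  assert (hL : ln (1/delta) = - ln delta) by (unfold Rdiv; rewrite Rmult_1_l; apply ln_Rinv; lra).
  assert (ln delta <= ln x) by (apply ln_le'; lra).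
  assert (ln delta <= ln y) by (apply ln_le'; lra).
  assert (ln x <= 0) by (rewrite <- ln_1; apply ln_le'; lra).
  assert (ln y <= 0) by (rewrite <- ln_1; apply ln_le'; lra).
  set (t := ln x - ln y).
  assert (et : exp t = x / y).
  { unfold t, Rminus. rewrite exp_plus, exp_Ropp, !exp_ln by lra. reflexivity. }
  assert (hq : (x - y) / y = exp t - 1) by (rewrite et; field; lra).
  rewrite hq, pow2_abs.
  set (M := Rmax (2 * ln (1 / delta)) 4).
  assert (h4 : 4 <= M) by apply Rmax_r.
  assert (h2 : 2 * ln (1/delta) <= M) by apply Rmax_l.
  pose proof (key t M h4 ltac:(unfold t in *; lra)).
  apply Rle_ge. apply (Rmult_le_reg_r M); [lra|].
  unfold Rdiv. rewrite Rmult_assoc, Rinv_l by lra.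
  unfold t in *. lra.
Qed.
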